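(* For every $f\in H^2(\mathbb{D})$, $$\lim_{|a|\to 1\ \text{or}\ n\to\infty}|\langle f,e_{n,a}\rangle|=0,$$ i.e. for every $\varepsilon>0$ there exist $r<1$ and $N\in\mathbb{N}$ such that $|\langle f,e_{n,a}\rangle|<\varepsilon$ whenever $(n,a)\in\mathbb{N}\times\mathbb{D}$ satisfies $|a|>r$ or $n>N$. (In other words, the complete Szegő dictionary $\{e_{n,a}\}_{(n,a)\in\mathbb{N}\times\mathbb{D}}$ satisfies the boundary vanishing condition.)
   Context: $\mathbb{D}$ is the open unit disc; $H^2(\mathbb{D})$ the Hardy space with inner product $\langle f,g\rangle=\frac{1}{2\pi}\int_0^{2\pi}f(e^{it})\overline{g(e^{it})}\,dt$. For $n\in\mathbb{N}=\{0,1,\dots\}$ and $a\in\mathbb{D}$, $k_{n,a}(z)=\left(\frac{\partial}{\partial\overline{a}}\right)^n\frac{1}{1-\overline{a}z}=\frac{n!\,z^n}{(1-\overline{a}z)^{n+1}}$ and $e_{n,a}=k_{n,a}/\|k_{n,a}\|$. *)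

(* Defs.v *)
From Stdlib Require Import Reals Factorial.
From Coquelicot Require Import Coquelicot.
Open Scope R_scope.

Fixpoint cpow (z : C) (n : nat) : C :=
  match n with O => RtoC 1 | S m => Cmult z (cpow z m) end.

(* An element of H^2(D) is represented by its Taylor coefficient sequence
   c (f(z) = sum_k c k z^k on the disc); f belongs to H^2 iff
   sum_k |c k|^2 < oo. *)
Definition H2 (c : nat -> C) : Prop :=
  ex_series (fun k => (Cmod (c k))^2).

Definition H2fun (c : nat -> C) (z : C) : C :=
  (Series (fun k => Re (Cmult (c k) (cpow z k))),
   Series (fun k => Im (Cmult (c k) (cpow z k)))).

(* The H^2 inner product <f,g> = (1/2pi) int f(e^it) conj(g(e^it)) dt,
   which by Parseval equals sum_k c_k conj(d_k) (absolutely convergent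
   for c, d in H^2). *)
Definition H2inner (c d : nat -> C) : C :=
  (Series (fun k => Re (Cmult (c k) (Cconj (d k)))),
   Series (fun k => Im (Cmult (c k) (Cconj (d k))))).

Definition H2norm (c : nat -> C) : R := sqrt (Re (H2inner c c)).

(* Taylor coefficients of k_{n,a}(z) = n! z^n / (1 - conj(a) z)^(n+1)
   = sum_{k >= n} (k!/(k-n)!) conj(a)^(k-n) z^k. *)
Definition kna (n : nat) (a : C) (k : nat) : C :=
  if Nat.leb n k then
    Cmult (RtoC (INR (fact k) / INR (fact (k - n)))) (cpow (Cconj a) (k - n))
  else RtoC 0.

Definition ena (n : nat) (a : C) (k : nat) : C :=
  Cmult (RtoC (/ H2norm (kna n a))) (kna n a k).

(* Main.v *)
Require Import Defs.
From Stdlib Require Import Reals Factorial Lia Lra.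
From Coquelicot Require Import Coquelicot.
Open Scope R_scope.

Lemma Cmod_cpow z m : Cmod (cpow z m) = Cmod z ^ m.
Proof.
  induction m as [|m IH]; simpl.
  - rewrite Cmod_R, Rabs_R1; reflexivity.
  - rewrite Cmod_mult, IH; reflexivity.
Qed.

Definition dd (n : nat) (t : R) (j : nat) : R :=
  (INR (fact (n + j)) / INR (fact j))^2 * (t^2)^j.

Lemma kna_low n a k : (k < n)%nat -> kna n a k = RtoC 0.
Proof.
  intro H; unfold kna.
  replace (Nat.leb n k) with false; [reflexivity|].
  symmetry; apply Nat.leb_gt; exact H.
Qed.

Lemma kna_shift n a j : Cmod (kna n a (n + j))^2 = dd n (Cmod a) j.
Proof.
  unfold kna, dd.
  replace (Nat.leb n (n + j)) with true by (symmetry; apply Nat.leb_le; lia).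
  replace (n + j - n)%nat with j by lia.
  rewrite Cmod_mult, Cmod_R, Cmod_cpow, Cmod_conj.
  rewrite Rabs_pos_eq.
  2: { apply Rmult_le_pos; [apply pos_INR|left; apply Rinv_0_lt_compat; apply INR_fact_lt_0]. }
  rewrite <- !pow_mult, Nat.mul_comm, pow_mult. 
  rewrite Rpow_mult_distr. rewrite <- !pow_mult. rewrite (Nat.mul_comm j 2). reflexivity.
Qed.

Lemma ratio_ge1 n j : 1 <= INR (fact (n + j)) / INR (fact j).
Proof.
  pose proof (INR_fact_lt_0 j).
  apply (Rmult_le_reg_r (INR (fact j))); auto.
  unfold Rdiv; rewrite Rmult_assoc, Rinv_l, Rmult_1_l, Rmult_1_r by lra.
  apply le_INR, fact_le; lia.
Qed.

Lemma dd_ge n t j : 0 <= t -> 0 <= (t^2)^j <= dd n t j.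
Proof.
  intro Ht; split.
  - apply pow_le; nra.
  - unfold dd. rewrite <- (Rmult_1_l ((t^2)^j)) at 1.
    apply Rmult_le_compat_r; [apply pow_le; nra|].
    pose proof (ratio_ge1 n j). nra.
Qed.

Lemma dd_pos n t j : 0 < t -> 0 < dd n t j.
Proof.
  intro Ht; unfold dd. pose proof (ratio_ge1 n j).
  apply Rmult_lt_0_compat; [nra|]. apply pow_lt; nra.
Qed.

Lemma dd_mono n t t' j : 0 <= t <= t' -> dd n t j <= dd n t' j.
Proof.
  intro H; unfold dd. apply Rmult_le_compat_l; [apply pow2_ge_0|].
  apply pow_incr; nra.
Qed.

Lemma dd_S n t j : dd n t (S j) = dd n t j * ((INR (S (n + j)) / INR (S j))^2 * t^2).
Proof.
  unfold dd. replace (n + S j)%nat with (S (n + j)) by lia.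
  rewrite !fact_simpl, !mult_INR.
  pose proof (INR_fact_lt_0 j). pose proof (INR_fact_lt_0 (n+j)).
  assert (0 < INR (S j)) by (apply lt_0_INR; lia).
  simpl pow. field. split; [change (INR (S j) <> 0); lra | lra].
Qed.

Lemma ratio_lim n : is_lim_seq (fun j => INR (S (n + j)) / INR (S j)) 1.
Proof.
  apply is_lim_seq_ext with (fun j => 1 + INR n * / INR (S j)).
  { intro j. assert (0 < INR (S j)) by (apply lt_0_INR; lia).
    replace (S (n + j)) with (n + S j)%nat by lia. rewrite plus_INR. field; lra. }
  assert (H0 : is_lim_seq (fun j => / INR (S j)) 0).
  { apply (is_lim_seq_incr_1 (fun j => / INR j) 0).
    replace (Finite 0) with (Rbar_inv p_infty) by reflexivity.
    apply is_lim_seq_inv; [apply is_lim_seq_INR|discriminate]. }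
  pose proof (is_lim_seq_plus' _ _ _ _ (is_lim_seq_const 1)
     (is_lim_seq_mult' _ _ _ _ (is_lim_seq_const (INR n)) H0)) as H1.
  replace (1 + INR n * 0) with 1 in H1 by ring. exact H1.
Qed.

Lemma ex_series_dd_pos n t : 0 < t < 1 -> ex_series (dd n t).
Proof.
  intro Ht.
  apply ex_series_ext with (fun j => Rabs (dd n t j)).
  { intro j; apply Rabs_pos_eq; left; apply dd_pos; lra. }
  apply ex_series_DAlembert with (t^2).
  - nra.
  - intro j; apply Rgt_not_eq, dd_pos; lra.
  - apply is_lim_seq_ext with (fun j => (INR (S (n + j)) / INR (S j)) * (INR (S (n + j)) / INR (S j)) * t^2).
    + intro j. rewrite dd_S. pose proof (dd_pos n t j (proj1 Ht)).
      assert (0 < INR (S j)) by (apply lt_0_INR; lia).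
      remember (INR (S j)) as x. remember (INR (S (n + j))) as y.
      rewrite Rabs_pos_eq.
      * field. split; lra.
      * apply Rmult_le_pos; [|left; apply Rinv_0_lt_compat; lra].
        apply Rmult_le_pos; [lra|]. apply Rmult_le_pos; [apply pow2_ge_0|apply pow2_ge_0].
    + pose proof (is_lim_seq_mult' _ _ _ _ (is_lim_seq_mult' _ _ _ _ (ratio_lim n) (ratio_lim n)) (is_lim_seq_const (t^2))) as H1.
      replace (1 * 1 * t^2) with (t^2) in H1 by ring. exact H1.
Qed.

Lemma ex_series_dd n t : 0 <= t < 1 -> ex_series (dd n t).
Proof.
  intro Ht.
  apply (@ex_series_le R_AbsRing R_CompleteNormedModule) with (dd n ((1 + t)/2)).
  - intro j. change (norm (dd n t j)) with (Rabs (dd n t j)).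
    rewrite Rabs_pos_eq.
    + apply dd_mono; lra.
    + pose proof (dd_ge n t j (proj1 Ht)); lra.
  - apply ex_series_dd_pos; lra.
Qed.
Lemma Series_nonneg a : (forall k, 0 <= a k) -> ex_series a -> 0 <= Series a.
Proof.
  intros Ha Hex.
  assert (E : Series (fun k => 0 * a k) = 0) by (rewrite Series_scal_l; ring).
  rewrite <- E. apply Series_le; [|exact Hex].
  intro k; rewrite Rmult_0_l; split; [lra|apply Ha].
Qed.

Lemma partial_le_series a : (forall k, 0 <= a k) -> ex_series a ->
  forall M, sum_n a M <= Series a.
Proof.
  intros Ha Hex M.
  rewrite (Series_incr_n a (S M)) by (lia || exact Hex).
  simpl Init.Nat.pred. rewrite sum_n_Reals.
  assert (0 <= Series (fun k => a (S M + k)%nat)).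
  { apply Series_nonneg; [intro; apply Ha|]. apply ex_series_incr_n; exact Hex. }
  lra.
Qed.

Lemma series_le_bound a B : ex_series a -> (forall M, sum_n a M <= B) -> Series a <= B.
Proof.
  intros Hex HM.
  pose proof (is_lim_seq_le (sum_n a) (fun _ => B) (Series a) B HM (Series_correct a Hex) (is_lim_seq_const B)).
  exact H.
Qed.

Definition bb n a k := Cmod (kna n a k)^2.

Lemma bb_low n a k : (k < n)%nat -> bb n a k = 0.
Proof. intro H; unfold bb; rewrite kna_low by exact H. rewrite Cmod_0; ring. Qed.

Lemma bb_facts n a : Cmod a < 1 ->
  ex_series (bb n a) /\ / (1 - Cmod a ^ 2) <= Series (bb n a).
Proof.
  intro Ha. pose proof (Cmod_ge_0 a) as Ha0.
  assert (Hd : ex_series (fun j => bb n a (n + j)%nat)).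
  { apply ex_series_ext with (dd n (Cmod a)).
    { intro j; unfold bb; rewrite kna_shift; reflexivity. }
    apply ex_series_dd; lra. }
  split.
  - apply (ex_series_incr_n (bb n a) n); exact Hd.
  - rewrite (Series_incr_n_aux (bb n a) n) by (intros; apply bb_low; auto).
    rewrite <- Series_geom.
    2: { rewrite Rabs_pos_eq by (apply pow_le; lra). nra. }
    apply Series_le; [|exact Hd].
    intro j; unfold bb; rewrite kna_shift. apply dd_ge; lra.
Qed.

Lemma bb_le n a k : Cmod a < 1 -> bb n a k <= INR (fact k) ^ 2.
Proof.
  intro Ha. pose proof (Cmod_ge_0 a) as Ha0.
  destruct (Compare_dec.le_lt_dec n k) as [Hk|Hk].
  - replace k with (n + (k - n))%nat by lia. set (j := (k - n)%nat).
    unfold bb; rewrite kna_shift. unfold dd.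
    pose proof (INR_fact_lt_0 j). pose proof (INR_fact_lt_0 (n + j)).
    assert (H1 : INR (fact (n + j)) / INR (fact j) <= INR (fact (n + j))).
    { apply (Rmult_le_reg_r (INR (fact j))); auto.
      unfold Rdiv; rewrite Rmult_assoc, Rinv_l, Rmult_1_r by lra.
      assert (1 <= INR (fact j)) by (change 1 with (INR 1); apply le_INR; pose proof (lt_O_fact j); lia).
      nra. }
    assert (H2 : (Cmod a ^ 2) ^ j <= 1).
    { rewrite <- (pow1 j). apply pow_incr; nra. }
    assert (H3 : 0 <= (Cmod a ^ 2) ^ j) by (apply pow_le; nra).
    pose proof (ratio_ge1 n j).
    assert ((INR (fact (n + j)) / INR (fact j)) ^ 2 <= INR (fact (n + j)) ^ 2).
    { apply pow_incr; lra. }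
    nra.
  - rewrite bb_low by exact Hk. apply pow2_ge_0.
Qed.

Lemma Re_mul_conj z : Re (Cmult z (Cconj z)) = Cmod z ^ 2.
Proof. rewrite Cmod2_alt. destruct z as [x y]. unfold Re, Im, Cmult, Cconj; simpl. ring. Qed.

Lemma H2norm_kna n a : H2norm (kna n a) = sqrt (Series (bb n a)).
Proof.
  unfold H2norm, H2inner. simpl. f_equal. apply Series_ext. intro k.
  unfold bb. rewrite <- Re_mul_conj. reflexivity.
Qed.

Lemma ena_sq n a k : Cmod a < 1 ->
  Cmod (ena n a k) ^ 2 = bb n a k / Series (bb n a).
Proof.
  intro Ha. destruct (bb_facts n a Ha) as [_ HS].
  assert (Hp : 0 < / (1 - Cmod a ^ 2)).
  { apply Rinv_0_lt_compat. pose proof (Cmod_ge_0 a). nra. }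
  set (S := Series (bb n a)) in *.
  assert (HS0 : 0 < S) by lra.
  unfold ena. rewrite H2norm_kna. fold S.
  rewrite Cmod_mult, Cmod_R.
  pose proof (sqrt_lt_R0 S HS0).
  rewrite Rabs_pos_eq by (left; apply Rinv_0_lt_compat; lra).
  unfold bb. rewrite Rpow_mult_distr.
  replace ((/ sqrt S) ^ 2) with (/ (sqrt S * sqrt S)) by (field; lra).
  rewrite sqrt_sqrt by lra. field. lra.
Qed.

Lemma ena_facts n a : Cmod a < 1 ->
  ex_series (fun k => Cmod (ena n a k) ^ 2) /\
  Series (fun k => Cmod (ena n a k) ^ 2) <= 1 /\
  (forall k, (k < n)%nat -> Cmod (ena n a k) ^ 2 = 0) /\
  (forall k, Cmod (ena n a k) ^ 2 <= INR (fact k) ^ 2 * (1 - Cmod a ^ 2)).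
Proof.
  intro Ha. destruct (bb_facts n a Ha) as [Hex HS].
  assert (Hp : 0 < 1 - Cmod a ^ 2) by (pose proof (Cmod_ge_0 a); nra).
  assert (Hp' : 0 < / (1 - Cmod a ^ 2)) by (apply Rinv_0_lt_compat; lra).
  set (S := Series (bb n a)) in *.
  assert (HS0 : 0 < S) by lra.
  assert (E : forall k, Cmod (ena n a k) ^ 2 = bb n a k * / S) by (intro; apply ena_sq; auto).
  split; [|split; [|split]].
  - apply ex_series_ext with (fun k => bb n a k * / S); [intro; rewrite E; auto|].
    apply ex_series_scal_r; exact Hex.
  - rewrite (Series_ext _ (fun k => bb n a k * / S)) by (intro; apply E).
    rewrite Series_scal_r. fold S. right; field; lra.
  - intros k Hk. rewrite E, bb_low by exact Hk. ring.
  - intro k. rewrite E.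
    assert (/ S <= 1 - Cmod a ^ 2).
    { rewrite <- (Rinv_inv (1 - Cmod a ^ 2)). apply Rinv_le_contravar; lra. }
    pose proof (bb_le n a k Ha).
    assert (0 <= bb n a k) by (unfold bb; apply pow2_ge_0).
    assert (0 <= / S) by (left; apply Rinv_0_lt_compat; lra).
    apply Rle_trans with (bb n a k * (1 - Cmod a ^ 2)).
    + apply Rmult_le_compat_l; lra.
    + apply Rmult_le_compat_r; lra.
Qed.
Lemma snm_plus (u v : nat -> R) n m :
  sum_n_m (fun k => u k + v k) n m = sum_n_m u n m + sum_n_m v n m.
Proof. apply (sum_n_m_plus (G:=R_AbelianMonoid)). Qed.

Lemma snm_scal c (u : nat -> R) n m :
  sum_n_m (fun k => c * u k) n m = c * sum_n_m u n m.
Proof. apply (sum_n_m_mult_l (K:=R_Ring)). Qed.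

Lemma snm_le (u v : nat -> R) n m : (forall k, u k <= v k) -> sum_n_m u n m <= sum_n_m v n m.
Proof. apply sum_n_m_le. Qed.

Lemma snm_le_loc (u v : nat -> R) n m :
  (forall k, (n <= k <= m)%nat -> u k <= v k) -> sum_n_m u n m <= sum_n_m v n m.
Proof.
  intro H.
  rewrite (sum_n_m_ext_loc u (fun k => if andb (Nat.leb n k) (Nat.leb k m) then u k else v k)).
  - apply snm_le. intro k. destruct (Nat.leb n k) eqn:E1; destruct (Nat.leb k m) eqn:E2; simpl; try lra.
    apply H. apply Nat.leb_le in E1, E2. lia.
  - intros k Hk. replace (Nat.leb n k) with true by (symmetry; apply Nat.leb_le; lia).
    replace (Nat.leb k m) with true by (symmetry; apply Nat.leb_le; lia). reflexivity.
Qed.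

Lemma snm_nonneg (u : nat -> R) n m : (forall k, 0 <= u k) -> 0 <= sum_n_m u n m.
Proof.
  intro H. apply Rle_trans with (sum_n_m (fun _ => 0) n m).
  - rewrite sum_n_m_const. lra.
  - apply snm_le; exact H.
Qed.

Lemma sn_mono (u : nat -> R) M j : (forall k, 0 <= u k) -> sum_n u M <= sum_n u (M + j).
Proof.
  intro H. induction j as [|j IH].
  - rewrite Nat.add_0_r; lra.
  - rewrite Nat.add_succ_r, sum_Sn. change (plus (sum_n u (M + j)) (u (S (M + j))))
      with (sum_n u (M + j) + u (S (M + j))). pose proof (H (S (M + j))). lra.
Qed.

Lemma amgm mu x y : 0 < mu -> x * y <= mu / 2 * x ^ 2 + y ^ 2 / (2 * mu).
Proof.
  intro Hm.
  assert (2 * mu * (x * y) <= mu ^ 2 * x ^ 2 + y ^ 2) by (pose proof (pow2_ge_0 (mu * x - y)); nra).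
  apply (Rmult_le_reg_l (2 * mu)); [lra|].
  replace (2 * mu * (mu / 2 * x ^ 2 + y ^ 2 / (2 * mu))) with (mu ^ 2 * x ^ 2 + y ^ 2) by (field; lra).
  exact H.
Qed.

Lemma key (F G : nat -> R) (K : nat) (SF T gam mu lam : R) :
  0 < mu -> 0 < lam -> (forall k, 0 <= F k) -> (forall k, 0 <= G k) ->
  (forall M, sum_n (fun k => F k ^ 2) M <= SF) ->
  (forall m, sum_n_m (fun k => F k ^ 2) (S K) m <= T) ->
  (forall M, sum_n (fun k => G k ^ 2) M <= 1) ->
  (forall k, (k <= K)%nat -> G k ^ 2 <= gam) ->
  forall M, sum_n (fun k => F k * G k) M <=
    mu / 2 * SF + INR (S K) * (gam / (2 * mu)) + lam / 2 * T + 1 / (2 * lam).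
Proof.
  intros Hmu Hlam HF HG HSF HT HG1 Hgam M.
  assert (Hsq : forall k, 0 <= F k * G k \/ F k * G k < 0) by (intro; lra).
  assert (Hfin : sum_n (fun k => F k * G k) (M + K) <=
     mu / 2 * SF + INR (S K) * (gam / (2 * mu)) + lam / 2 * T + 1 / (2 * lam)).
  { unfold sum_n. rewrite (sum_n_m_Chasles _ 0 K (M + K)) by lia.
    change (plus ?a ?b) with (a + b).
    assert (Hh : sum_n_m (fun k => F k * G k) 0 K <= mu / 2 * SF + INR (S K) * (gam / (2 * mu))).
    { apply Rle_trans with (sum_n_m (fun k => mu / 2 * F k ^ 2 + gam / (2 * mu)) 0 K).
      - apply snm_le_loc. intros k Hk.
        apply Rle_trans with (mu / 2 * F k ^ 2 + G k ^ 2 / (2 * mu)); [apply amgm; auto|].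
        assert (G k ^ 2 / (2 * mu) <= gam / (2 * mu)).
        { unfold Rdiv; apply Rmult_le_compat_r; [left; apply Rinv_0_lt_compat; lra|]. apply Hgam; lia. }
        lra.
      - rewrite snm_plus, snm_scal, sum_n_m_const. rewrite Nat.sub_0_r.
        pose proof (HSF K). unfold sum_n in H.
        assert (0 <= INR (S K) * (gam / (2 * mu))) by
          (apply Rmult_le_pos; [apply pos_INR|]; pose proof (Hgam 0%nat ltac:(lia)); pose proof (pow2_ge_0 (G 0%nat));
           unfold Rdiv; apply Rmult_le_pos; [lra|left; apply Rinv_0_lt_compat; lra]).
        assert (mu / 2 * sum_n_m (fun k => F k ^ 2) 0 K <= mu / 2 * SF) by (apply Rmult_le_compat_l; lra).
        change (fun k : nat => gam / (2 * mu)) with (fun _ : nat => gam / (2 * mu)). lra. }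
    assert (Ht : sum_n_m (fun k => F k * G k) (S K) (M + K) <= lam / 2 * T + 1 / (2 * lam)).
    { apply Rle_trans with (sum_n_m (fun k => lam / 2 * F k ^ 2 + / (2 * lam) * G k ^ 2) (S K) (M + K)).
      - apply snm_le. intro k. pose proof (amgm lam (F k) (G k) Hlam). unfold Rdiv in *. lra.
      - rewrite snm_plus, !snm_scal.
        pose proof (HT (M + K)%nat).
        assert (sum_n_m (fun k => G k ^ 2) (S K) (M + K) <= 1).
        { assert (E : sum_n_m (fun k => G k ^ 2) (S K) (M + K) = sum_n (fun k => G k^2) (M+K) - sum_n (fun k => G k^2) K)
            by (apply (sum_n_m_sum_n (G:=R_AbelianGroup)); lia).
          rewrite E.
          pose proof (HG1 (M + K)%nat). assert (0 <= sum_n (fun k => G k ^ 2) K).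
          { apply snm_nonneg. intro; apply pow2_ge_0. }
          lra. }
        assert (0 < / (2 * lam)) by (apply Rinv_0_lt_compat; lra).
        unfold Rdiv. nra. }
    lra. }
  apply Rle_trans with (2 := Hfin). apply sn_mono. intro k. apply Rmult_le_pos; auto.
Qed.
Lemma im_le_Cmod c : Rabs (Im c) <= Cmod c.
Proof. eapply Rle_trans; [apply Rmax_r|apply Rmax_Cmod]. Qed.

Lemma Cmod_le_sum (z : C) : Cmod z <= Rabs (Re z) + Rabs (Im z).
Proof.
  destruct z as [x y]. unfold Cmod, Re, Im; simpl fst; simpl snd.
  pose proof (Rabs_pos x). pose proof (Rabs_pos y).
  rewrite <- (sqrt_pow2 (Rabs x + Rabs y)) by lra.
  apply sqrt_le_1_alt.
  rewrite <- (pow2_abs x), <- (pow2_abs y). nra.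
Qed.

Theorem theorem5 :
  forall f : nat -> C, H2 f ->
  forall eps : R, 0 < eps ->
  exists r : R, r < 1 /\ exists N : nat,
    forall (n : nat) (a : C), Cmod a < 1 ->
      (r < Cmod a \/ (N < n)%nat) ->
      Cmod (H2inner f (ena n a)) < eps.
Proof.
  intros f Hf eps Heps.
  set (F := fun k => Cmod (f k)).
  set (SF := Series (fun k => F k ^ 2)).
  assert (HFsq : forall k, 0 <= F k ^ 2) by (intro; apply pow2_ge_0).
  assert (HSF : forall M, sum_n (fun k => F k ^ 2) M <= SF).
  { apply partial_le_series; [exact HFsq|exact Hf]. }
  assert (HSF0 : 0 <= SF) by (apply Series_nonneg; [exact HFsq|exact Hf]).
  assert (Heta : 0 < eps ^ 2 / 64) by (apply Rdiv_lt_0_compat; nra).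
  assert (Hlim : is_lim_seq (sum_n (fun k => F k ^ 2)) SF) by exact (Series_correct _ Hf).
  pose proof (proj2 (is_lim_seq_spec _ _) Hlim (mkposreal _ Heta)) as HK.
  destruct HK as [K HK]. specialize (HK K (Nat.le_refl K)).
  fold SF in HK. change (Rabs (sum_n (fun k => F k ^ 2) K - SF) < eps ^ 2 / 64) in HK.
  set (T := SF - sum_n (fun k => F k ^ 2) K).
  assert (HT1 : T < eps ^ 2 / 64).
  { unfold T. pose proof (HSF K). rewrite Rabs_left1 in HK; lra. }
  assert (HT : forall m, sum_n_m (fun k => F k ^ 2) (S K) m <= T).
  { intro m. destruct (Compare_dec.le_lt_dec K m) as [Hm|Hm].
    - assert (E : sum_n_m (fun k => F k ^ 2) (S K) m = sum_n (fun k => F k^2) m - sum_n (fun k => F k^2) K)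
        by (apply (sum_n_m_sum_n (G:=R_AbelianGroup)); lia).
      rewrite E. unfold T. pose proof (HSF m). lra.
    - rewrite sum_n_m_zero by lia. change (@zero R_AbelianMonoid) with 0.
      unfold T. pose proof (HSF K). lra. }
  set (mu := eps / (8 * (SF + 1))).
  set (lam := 8 / eps).
  assert (HSK : 0 < INR (S K)) by (apply lt_0_INR; lia).
  assert (Hmu : 0 < mu) by (apply Rdiv_lt_0_compat; lra).
  assert (Hlam : 0 < lam) by (apply Rdiv_lt_0_compat; lra).
  set (gam := eps * mu / (8 * INR (S K))).
  assert (Hgam : 0 < gam) by (apply Rdiv_lt_0_compat; nra).
  pose proof (INR_fact_lt_0 K) as HfK.
  set (r := 1 - gam / (2 * INR (fact K) ^ 2)).
  assert (Hr : gam / (2 * INR (fact K) ^ 2) > 0) by (apply Rdiv_lt_0_compat; nra).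
  exists r. split; [unfold r; lra|]. exists K.
  intros n a Ha Hcase.
  destruct (ena_facts n a Ha) as [Gex [GS [Glow Gbnd]]].
  set (G := fun k => Cmod (ena n a k)).
  assert (HG0 : forall k, 0 <= G k) by (intro; apply Cmod_ge_0).
  assert (HG1 : forall M, sum_n (fun k => G k ^ 2) M <= 1).
  { intro M. eapply Rle_trans; [apply partial_le_series|exact GS].
    - intro; apply pow2_ge_0.
    - exact Gex. }
  assert (Hgk : forall k, (k <= K)%nat -> G k ^ 2 <= gam).
  { intros k Hk. destruct (Compare_dec.le_lt_dec n k) as [Hnk|Hnk].
    - destruct Hcase as [Hc|Hc]; [|lia].
      unfold G. eapply Rle_trans; [apply Gbnd|].
      pose proof (Cmod_ge_0 a).
      assert (INR (fact k) ^ 2 <= INR (fact K) ^ 2).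
      { apply pow_incr. split; [apply pos_INR|]. apply le_INR, fact_le; exact Hk. }
      assert (1 - Cmod a ^ 2 <= 2 * (1 - Cmod a)) by nra.
      assert (2 * (1 - Cmod a) < gam / INR (fact K) ^ 2).
      { unfold r in Hc. unfold Rdiv in *. rewrite Rinv_mult in Hc. lra. }
      assert (0 <= 1 - Cmod a ^ 2) by nra.
      apply Rle_trans with (INR (fact K) ^ 2 * (1 - Cmod a ^ 2)).
      + apply Rmult_le_compat_r; lra.
      + assert (0 < INR (fact K) ^ 2) by nra.
        apply Rle_trans with (INR (fact K) ^ 2 * (gam / INR (fact K) ^ 2)).
        * apply Rmult_le_compat_l; lra.
        * right; field; lra.
    - unfold G. rewrite Glow by exact Hnk. lra. }
  pose proof (key F G K SF T gam mu lam Hmu Hlam (fun k => Cmod_ge_0 (f k)) HG0 HSF HT HG1 Hgk) as Hkey.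
  set (B := mu / 2 * SF + INR (S K) * (gam / (2 * mu)) + lam / 2 * T + 1 / (2 * lam)) in Hkey.
  assert (HB : B < eps / 2).
  { unfold B.
    assert (mu / 2 * SF < eps / 16).
    { unfold mu. apply (Rmult_lt_reg_r (SF + 1)); [lra|].
      replace (eps / (8 * (SF + 1)) / 2 * SF * (SF + 1)) with (eps * SF / 16) by (field; lra). nra. }
    assert (INR (S K) * (gam / (2 * mu)) = eps / 16) by (unfold gam; field; lra).
    assert (lam / 2 * T < eps / 16).
    { unfold lam. replace (8 / eps / 2 * T) with (4 * T / eps) by (field; lra).
      apply (Rmult_lt_reg_r eps); [lra|]. replace (4 * T / eps * eps) with (4 * T) by (field; lra). nra. }
    assert (1 / (2 * lam) = eps / 16) by (unfold lam; field; lra).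
    lra. }
  set (h := fun k => Cmult (f k) (Cconj (ena n a k))).
  assert (Hh : forall k, Cmod (h k) = F k * G k).
  { intro k. unfold h, F, G. cbv beta. rewrite Cmod_mult, Cmod_conj. reflexivity. }
  assert (HFGex : ex_series (fun k => F k * G k)).
  { apply (@ex_series_le R_AbsRing R_CompleteNormedModule) with (fun k => F k ^ 2 + G k ^ 2).
    - intro k. change (norm (F k * G k)) with (Rabs (F k * G k)).
      pose proof (Cmod_ge_0 (f k)). pose proof (HG0 k).
      rewrite Rabs_pos_eq by (apply Rmult_le_pos; auto).
      pose proof (amgm 1 (F k) (G k) Rlt_0_1). pose proof (pow2_ge_0 (F k)). pose proof (pow2_ge_0 (G k)).
      lra.
    - apply ex_series_ext with (fun k => plus (F k ^ 2) (G k ^ 2)); [reflexivity|].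
      apply (@ex_series_plus R_AbsRing R_NormedModule); [exact Hf|exact Gex]. }
  assert (HFG : Series (fun k => F k * G k) <= B) by (apply series_le_bound; auto).
  assert (HRe : Rabs (Series (fun k => Re (h k))) <= Series (fun k => F k * G k)).
  { eapply Rle_trans; [apply Series_Rabs|].
    - apply (@ex_series_le R_AbsRing R_CompleteNormedModule) with (fun k => F k * G k); [|exact HFGex].
      intro k. change (norm (Rabs (Re (h k)))) with (Rabs (Rabs (Re (h k)))).
      rewrite Rabs_Rabsolu, <- Hh. apply re_le_Cmod.
    - apply Series_le; [|exact HFGex]. intro k. split; [apply Rabs_pos|]. rewrite <- Hh. apply re_le_Cmod. }
  assert (HIm : Rabs (Series (fun k => Im (h k))) <= Series (fun k => F k * G k)).
  { eapply Rle_trans; [apply Series_Rabs|].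
    - apply (@ex_series_le R_AbsRing R_CompleteNormedModule) with (fun k => F k * G k); [|exact HFGex].
      intro k. change (norm (Rabs (Im (h k)))) with (Rabs (Rabs (Im (h k)))).
      rewrite Rabs_Rabsolu, <- Hh. apply im_le_Cmod.
    - apply Series_le; [|exact HFGex]. intro k. split; [apply Rabs_pos|]. rewrite <- Hh. apply im_le_Cmod. }
  eapply Rle_lt_trans; [apply Cmod_le_sum|].
  unfold H2inner. simpl Re. simpl Im. fold h.
  change (Rabs (Series (fun k => Re (h k))) + Rabs (Series (fun k => Im (h k))) < eps).
  lra.
Qed.
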